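(* Let $n\ge 3$. Consider the $n^2$-puzzle: the $n\times n$ grid graph with $n^2$ distinct robots, one occupying each vertex. Then any two states of the $n^2$-puzzle are connected via legal moves, i.e., from any assignment of the robots to the vertices one can reach any other such assignment by a finite sequence of legal moves.
   Context: A state is a bijection between the set of robots and the vertex set of the grid. A legal move (one time step) takes a state to another state such that each robot either stays at its vertex or moves to an adjacent vertex, no two robots end at the same vertex, and no two robots traverse the same edge in opposite directions (swap). Several robots may move simultaneously; since every vertex is occupied, the moving robots move synchronously along one or more vertex-disjoint cycles of the grid. *)

(* Defs.v *)
From mathcomp Require Import all_boot all_fingroup.
Set Implicit Arguments. Unset Strict Implicit. Unset Printing Implicit Defensive.

Definition vert (n : nat) : finType := ('I_n * 'I_n)%type.

Definition adj (n : nat) (u v : vert n) : bool :=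
  ((u.1 == v.1) && ((u.2.+1 == v.2) || (v.2.+1 == u.2))) ||
  ((u.2 == v.2) && ((u.1.+1 == v.1) || (v.1.+1 == u.1))).

(* Robots: n^2 distinct robots; we label them by an n^2-element type,
   namely (a copy of) the vertex set. A state is a bijection robots -> vertices. *)
Definition robot (n : nat) : finType := vert n.
Definition state (n : nat) := {perm vert n}.

(* A legal move from s to t: each robot stays or moves to an adjacent vertex,
   no two robots end at the same vertex (automatic: t is a bijection), and
   no two robots swap along an edge. *)
Definition legal_move (n : nat) (s t : state n) : Prop :=
  (forall r : robot n, t r = s r \/ adj (s r) (t r)) /\
  (forall r1 r2 : robot n, r1 <> r2 -> ~ (t r1 = s r2 /\ t r2 = s r1)).

Inductive reachable (n : nat) : state n -> state n -> Prop :=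
  | reach_refl s : reachable s s
  | reach_step s t u : legal_move s t -> reachable t u -> reachable s u.

(* Main.v *)
Require Import Defs.
From mathcomp Require Import all_boot all_fingroup zify.
Set Implicit Arguments. Unset Strict Implicit.

Module MA.

Lemma ordE n (a b : 'I_n) : (a == b) = (a == b :> nat). Proof. by []. Qed.

Lemma tpermE (T : finType) (x y z : T) :
  tperm x y z = if z == x then y else if z == y then x else z.
Proof.
case: tpermP => [->|->|/eqP/negbTE -> /eqP/negbTE ->]; rewrite ?eqxx //.
by case: eqP => // ->.
Qed.

Lemma reach_trans n (a b c : state n) : reachable a b -> reachable b c -> reachable a c.
Proof. elim=> // s t u H _ IH /IH; exact: reach_step. Qed.

Local Open Scope group_scope.
Definition P n (p : {perm vert n}) := forall s : state n, reachable s (s * p).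

Lemma P1 n : P (1 : {perm vert n}). Proof. by move=> s; rewrite mulg1; constructor. Qed.

Lemma PM n (p q : {perm vert n}) : P p -> P q -> P (p * q).
Proof. move=> hp hq s; rewrite mulgA; exact: reach_trans (hp s) (hq _). Qed.

Lemma adj_sym n (u v : vert n) : adj u v = adj v u.
Proof. rewrite /adj !ordE; lia. Qed.

Lemma Plegal n (p : {perm vert n}) :
  (forall v, p v = v \/ adj v (p v)) -> (forall v, p (p v) = v -> p v = v) -> P p.
Proof.
move=> h1 h2 s; apply: reach_step (reach_refl _); split.
  by move=> r; rewrite permM; apply: h1.
move=> r1 r2 ne [e1 e2]; apply: ne; rewrite !permM in e1 e2.
have: p (p (s r1)) = s r1 by rewrite e1 e2.
by move/h2; rewrite e1 => /perm_inj.
Qed.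

End MA.
Import MA.

Module MB.
Local Open Scope group_scope.

Lemma neqF (T : eqType) (x y : T) : x != y -> ((x == y) = false) * ((y == x) = false).
Proof. by move=> h; rewrite (negbTE h) eq_sym (negbTE h). Qed.

Definition c4 (T : finType) (a b c d : T) := tperm c d * tperm b c * tperm a b.

Ltac simpF F := repeat (rewrite eqxx /= || rewrite F /=).

Lemma c4E (T : finType) (a b c d x : T) : a != b -> a != c -> a != d -> b != c -> b != d -> c != d ->
  c4 a b c d x = if x == a then b else if x == b then c else if x == c then d else if x == d then a else x.
Proof.
move=> h1 h2 h3 h4 h5 h6; rewrite /c4 !permM !tpermE.
have F := (neqF h1, neqF h2, neqF h3, neqF h4, neqF h5, neqF h6).
have [E|/neqF xa] := eqVneq x a; first by rewrite ?E; simpF F.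
have [E|/neqF xb] := eqVneq x b; first by rewrite ?E; simpF F.
have [E|/neqF xc] := eqVneq x c; first by rewrite ?E; simpF F.
have [E|/neqF xd] := eqVneq x d; first by rewrite ?E; simpF F.
by simpF (xa, xb, xc, xd).
Qed.
Definition c6 (T : finType) (a b c d e f : T) := tperm e f * tperm d e * tperm c d * tperm b c * tperm a b.
Lemma c6E (T : finType) (a b c d e f x : T) : a != b -> a != c -> a != d -> a != e -> a != f -> b != c -> b != d -> b != e -> b != f -> c != d -> c != e -> c != f -> d != e -> d != f -> e != f ->
  c6 a b c d e f x = if x == a then b else (if x == b then c else (if x == c then d else (if x == d then e else (if x == e then f else (if x == f then a else x))))).
Proof.
move=> h0 h1 h2 h3 h4 h5 h6 h7 h8 h9 h10 h11 h12 h13 h14.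
have F := (neqF h0, neqF h1, neqF h2, neqF h3, neqF h4, neqF h5, neqF h6, neqF h7, neqF h8, neqF h9, neqF h10, neqF h11, neqF h12, neqF h13, neqF h14).
rewrite /c6 !permM !tpermE.
have [E|/neqF xa] := eqVneq x a; first by rewrite ?E; simpF F.
have [E|/neqF xb] := eqVneq x b; first by rewrite ?E; simpF F.
have [E|/neqF xc] := eqVneq x c; first by rewrite ?E; simpF F.
have [E|/neqF xd] := eqVneq x d; first by rewrite ?E; simpF F.
have [E|/neqF xe] := eqVneq x e; first by rewrite ?E; simpF F.
have [E|/neqF xf] := eqVneq x f; first by rewrite ?E; simpF F.
by simpF (xa, xb, xc, xd, xe, xf).
Qed.
Lemma P_c4 n (a b c d : vert n) : a != b -> a != c -> a != d -> b != c -> b != d -> c != d ->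
  adj a b -> adj b c -> adj c d -> adj d a -> P (c4 a b c d).
Proof.
move=> h0 h1 h2 h3 h4 h5 A0 A1 A2 A3.
have F := (neqF h0, neqF h1, neqF h2, neqF h3, neqF h4, neqF h5).
apply: Plegal => v.
  rewrite c4E //.
  have [E|/neqF xa] := eqVneq v a; first by rewrite ?E; simpF F; right.
  have [E|/neqF xb] := eqVneq v b; first by rewrite ?E; simpF F; right.
  have [E|/neqF xc] := eqVneq v c; first by rewrite ?E; simpF F; right.
  have [E|/neqF xd] := eqVneq v d; first by rewrite ?E; simpF F; right.
  by left; simpF (xa, xb, xc, xd).
rewrite !c4E //.
have [E|/neqF xa] := eqVneq v a; first by rewrite ?E; simpF F; move/eqP; rewrite ?F.
have [E|/neqF xb] := eqVneq v b; first by rewrite ?E; simpF F; move/eqP; rewrite ?F.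
have [E|/neqF xc] := eqVneq v c; first by rewrite ?E; simpF F; move/eqP; rewrite ?F.
have [E|/neqF xd] := eqVneq v d; first by rewrite ?E; simpF F; move/eqP; rewrite ?F.
by simpF (xa, xb, xc, xd).
Qed.

Lemma P_c6 n (a b c d e f : vert n) : a != b -> a != c -> a != d -> a != e -> a != f -> b != c -> b != d -> b != e -> b != f -> c != d -> c != e -> c != f -> d != e -> d != f -> e != f ->
  adj a b -> adj b c -> adj c d -> adj d e -> adj e f -> adj f a -> P (c6 a b c d e f).
Proof.
move=> h0 h1 h2 h3 h4 h5 h6 h7 h8 h9 h10 h11 h12 h13 h14 A0 A1 A2 A3 A4 A5.
have F := (neqF h0, neqF h1, neqF h2, neqF h3, neqF h4, neqF h5, neqF h6, neqF h7, neqF h8, neqF h9, neqF h10, neqF h11, neqF h12, neqF h13, neqF h14).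
apply: Plegal => v.
  rewrite c6E //.
  have [E|/neqF xa] := eqVneq v a; first by rewrite ?E; simpF F; right.
  have [E|/neqF xb] := eqVneq v b; first by rewrite ?E; simpF F; right.
  have [E|/neqF xc] := eqVneq v c; first by rewrite ?E; simpF F; right.
  have [E|/neqF xd] := eqVneq v d; first by rewrite ?E; simpF F; right.
  have [E|/neqF xe] := eqVneq v e; first by rewrite ?E; simpF F; right.
  have [E|/neqF xf] := eqVneq v f; first by rewrite ?E; simpF F; right.
  by left; simpF (xa, xb, xc, xd, xe, xf).
rewrite !c6E //.
have [E|/neqF xa] := eqVneq v a; first by rewrite ?E; simpF F; move/eqP; rewrite ?F.
have [E|/neqF xb] := eqVneq v b; first by rewrite ?E; simpF F; move/eqP; rewrite ?F.
have [E|/neqF xc] := eqVneq v c; first by rewrite ?E; simpF F; move/eqP; rewrite ?F.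
have [E|/neqF xd] := eqVneq v d; first by rewrite ?E; simpF F; move/eqP; rewrite ?F.
have [E|/neqF xe] := eqVneq v e; first by rewrite ?E; simpF F; move/eqP; rewrite ?F.
have [E|/neqF xf] := eqVneq v f; first by rewrite ?E; simpF F; move/eqP; rewrite ?F.
by simpF (xa, xb, xc, xd, xe, xf).
Qed.
Lemma block n (v0 v1 v2 v3 v4 v5 : vert n) : v0 != v1 -> v0 != v2 -> v0 != v3 -> v0 != v4 -> v0 != v5 -> v1 != v2 -> v1 != v3 -> v1 != v4 -> v1 != v5 -> v2 != v3 -> v2 != v4 -> v2 != v5 -> v3 != v4 -> v3 != v5 -> v4 != v5 ->
  adj v0 v1 -> adj v1 v2 -> adj v3 v4 -> adj v4 v5 -> adj v0 v3 -> adj v1 v4 -> adj v2 v5 -> P (tperm v0 v1).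
Proof.
move=> h0 h1 h2 h3 h4 h5 h6 h7 h8 h9 h10 h11 h12 h13 h14 A01 A12 A34 A45 A03 A14 A25.
have F := (neqF h0, neqF h1, neqF h2, neqF h3, neqF h4, neqF h5, neqF h6, neqF h7, neqF h8, neqF h9, neqF h10, neqF h11, neqF h12, neqF h13, neqF h14).
have -> : tperm v0 v1 = c4 v0 v1 v4 v3 * c4 v1 v2 v5 v4 * c6 v0 v3 v4 v5 v2 v1.
  apply/permP => x; rewrite permM (permM (c4 _ _ _ _)) c6E ?F // !c4E ?F // tpermE.
  have [E|/neqF xv0] := eqVneq x v0; first by rewrite ?E; simpF F.
  have [E|/neqF xv1] := eqVneq x v1; first by rewrite ?E; simpF F.
  have [E|/neqF xv2] := eqVneq x v2; first by rewrite ?E; simpF F.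
  have [E|/neqF xv3] := eqVneq x v3; first by rewrite ?E; simpF F.
  have [E|/neqF xv4] := eqVneq x v4; first by rewrite ?E; simpF F.
  have [E|/neqF xv5] := eqVneq x v5; first by rewrite ?E; simpF F.
  by simpF (xv0, xv1, xv2, xv3, xv4, xv5).
apply: PM; [apply: PM|]; [apply: P_c4|apply: P_c4|apply: P_c6]; rewrite ?F // adj_sym //.
Qed.

End MB.
Import MB.

Module MC.

Lemma hblock n (r r' c0 c1 c2 : 'I_n) : (r'.+1 = r \/ r.+1 = r') ->
  ((c1 = c0.+1 :> nat /\ c2 = c1.+1 :> nat) \/ (c0 = c1.+1 :> nat /\ c1 = c2.+1 :> nat)) ->
  P (tperm (r,c0) (r,c1)).
Proof.
move=> hr hc; apply: (@block n _ _ (r,c2) (r',c0) (r',c1) (r',c2));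
  rewrite /adj ?xpair_eqE /= !ordE; lia.
Qed.

Lemma vblock n (r r' c0 c1 c2 : 'I_n) : (r'.+1 = r \/ r.+1 = r') ->
  ((c1 = c0.+1 :> nat /\ c2 = c1.+1 :> nat) \/ (c0 = c1.+1 :> nat /\ c1 = c2.+1 :> nat)) ->
  P (tperm (c0,r) (c1,r)).
Proof.
move=> hr hc; apply: (@block n _ _ (c2,r) (c0,r') (c1,r') (c2,r'));
  rewrite /adj ?xpair_eqE /= !ordE; lia.
Qed.

Lemma row_nb n (i : 'I_n) : 2 <= n -> exists r : 'I_n, r.+1 = i \/ i.+1 = r.
Proof.
move=> hn; have hi := ltn_ord i; case: (ltnP i.+1 n) => h; first by exists (Ordinal h); right.
have h' : i.-1 < n by lia.
exists (Ordinal h'); left => /=. lia.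
Qed.

Lemma hcase n (i j j' : 'I_n) : 3 <= n -> j.+1 = j' -> P (tperm (i,j) (i,j')).
Proof.
move=> hn e; have hj := ltn_ord j; have hj' := ltn_ord j'; have [r hr] := row_nb i (ltnW hn).
case: (ltnP j'.+1 n) => h.
  apply: (@hblock n i r j j' (Ordinal h)); first by lia.
  by left => /=; lia.
have h' : j.-1 < n by lia.
rewrite tpermC; apply: (@hblock n i r j' j (Ordinal h')); first by lia.
by right => /=; lia.
Qed.

Lemma vcase n (i i' j : 'I_n) : 3 <= n -> i.+1 = i' -> P (tperm (i,j) (i',j)).
Proof.
move=> hn e; have hj := ltn_ord i; have hj' := ltn_ord i'; have [r hr] := row_nb j (ltnW hn).
case: (ltnP i'.+1 n) => h.
  apply: (@vblock n j r i i' (Ordinal h)); first by lia.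
  by left => /=; lia.
have h' : i.-1 < n by lia.
rewrite tpermC; apply: (@vblock n j r i' i (Ordinal h')); first by lia.
by right => /=; lia.
Qed.

Lemma adjP n (x y : vert n) : 3 <= n -> adj x y -> P (tperm x y).
Proof.
move=> hn; case: x y => [i j] [i' j']; rewrite /adj /= !ordE.
case/orP=> /andP[/eqP e /orP[/eqP h|/eqP h]].
- by have <- := ord_inj e; apply: hcase.
- by have <- := ord_inj e; rewrite tpermC; apply: hcase.
- by have <- := ord_inj e; apply: vcase.
- by have <- := ord_inj e; rewrite tpermC; apply: vcase.
Qed.

End MC.
Import MC.

Module MD.

Definition dd n (x y : vert n) : nat :=
  (x.1 - y.1) + (y.1 - x.1) + (x.2 - y.2) + (y.2 - x.2).

Lemma step n (x y : vert n) : x != y -> exists z, adj x z /\ dd z y < dd x y.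
Proof.
case: x y => [a b] [c e]; rewrite xpair_eqE !ordE /dd /= => ne.
have ha := ltn_ord a; have hb := ltn_ord b; have hc := ltn_ord c; have he := ltn_ord e.
case: (ltngtP a c) => h.
- have h1 : a.+1 < n by lia.
  by exists (Ordinal h1, b); rewrite /adj /= !ordE /=; split; lia.
- have h1 : a.-1 < n by lia.
  by exists (Ordinal h1, b); rewrite /adj /= !ordE /=; split; lia.
case: (ltngtP b e) => h'.
- have h1 : b.+1 < n by lia.
  by exists (a, Ordinal h1); rewrite /adj /= !ordE /=; split; lia.
- have h1 : b.-1 < n by lia.
  by exists (a, Ordinal h1); rewrite /adj /= !ordE /=; split; lia.
lia.
Qed.

Local Open Scope group_scope.

Lemma tconj (T : finType) (x y z : T) : x != y -> x != z -> z != y ->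
  tperm x y = tperm x z * tperm z y * tperm x z.
Proof.
move=> h1 h2 h3; have F := (neqF h1, neqF h2, neqF h3).
apply/permP => w; rewrite !permM !tpermE.
have [E|/neqF wx] := eqVneq w x; first by rewrite ?E; simpF F.
have [E|/neqF wy] := eqVneq w y; first by rewrite ?E; simpF F.
have [E|/neqF wz] := eqVneq w z; first by rewrite ?E; simpF F.
by simpF (wx, wy, wz).
Qed.

Lemma allT n (x y : vert n) : 3 <= n -> P (tperm x y).
Proof.
move=> hn; move: {2}(dd x y) (leqnn (dd x y)) => k; elim: k x y => [|k IH] x y hk.
  suff -> : x = y by rewrite tperm1; apply: P1.
  case: x y hk => [a b] [c e]; rewrite /dd /= => hk.
  by congr pair; apply: ord_inj; lia.
have [->|ne] := eqVneq x y; first by rewrite tperm1; apply: P1.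
have [z [hz hd]] := step ne.
have [<-|nzy] := eqVneq z y; first exact: adjP.
have nxz : x != z.
  by apply/eqP => exz; move: hz; rewrite exz /adj !ordE; lia.
rewrite (tconj ne nxz nzy); apply: PM; first apply: PM; try exact: adjP.
by apply: IH; lia.
Qed.


End MD.
Import MD.

Theorem proposition4 (n : nat) (hn : 3 <= n) (s t : state n) : reachable s t.
Proof.
have : P (s^-1 * t)%g.
  have [ts -> _] := prod_tpermP (s^-1 * t)%g%g.
  elim: ts => [|[a b] ts IH]; first by rewrite big_nil; apply: P1.
  by rewrite big_cons; apply: PM => //; apply: allT.
by move/(_ s); rewrite mulKVg.
Qed.
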